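(* Let $U$ be a Galois algebra over $\Gamma$ in $\mathcal{K}=(L*\mathfrak{M})^G$ with $\mathfrak{M}\cong\mathbb{Z}^n$. Then $GK\,U\geq GK\,\Gamma+n$.
   Context: $\mathsf{k}$ is an algebraically closed field of characteristic zero. Galois algebra setup: $\Gamma\subset U$ where $\Gamma$ is a finitely generated commutative $\mathsf{k}$-domain and $U$ is an associative algebra finitely generated over $\Gamma$; $K$ is the field of fractions of $\Gamma$; $L$ is a finite Galois extension of $K$ with Galois group $G$; $\mathfrak{M}\subset\operatorname{Aut}_{\mathsf{k}}L$ is a monoid with the separating property (if $m,m'\in\mathfrak{M}$ have the same restriction to $K$ then $m=m'$), and $G$ acts on $\mathfrak{M}$ by conjugation, hence on the skew monoid ring $L*\mathfrak{M}$. $U$ is a Galois algebra over $\Gamma$ if there is an embedding $U\hookrightarrow\mathcal{K}:=(L*\mathfrak{M})^G$ with $KU=UK=\mathcal{K}$. $GK$ is Gelfand–Kirillov dimension: $GK\,A=\sup_V\limsup_m\log(\dim V^m)/\log m$ over finite-dimensional subspaces $V\ni1$. *)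

(* Defs.v *)
From Stdlib Require List.
From HB Require Import structures.
From mathcomp Require Import all_boot all_order all_algebra.
From mathcomp Require Import boolp classical_sets reals ereal sequences exp.
Set Implicit Arguments. Unset Strict Implicit. Unset Printing Implicit Defensive.
Import Order.TTheory GRing.Theory Num.Theory.
Local Open Scope ring_scope.
Local Open Scope classical_set_scope.

Section GK.
Variables (k : fieldType) (A : algType k).

Definition kspan (S : set A) : set A :=
  [set x | exists ps : seq (k * A), (forall p, p \in ps -> S p.2) /\
     x = \sum_(p <- ps) p.1 *: p.2].

Definition lin_indep (ws : seq A) : Prop :=
  forall cs : seq k, size cs = size ws ->
    \sum_(i < size ws) cs`_i *: ws`_i = 0 -> forall i, (i < size ws)%N -> cs`_i = 0.

Definition kdim (R : realType) (V : set A) : \bar R :=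
  ereal_sup [set ((size ws)%:R)%:E | ws in
     [set ws : seq A | lin_indep ws /\ forall w, w \in ws -> V w]].

Definition spow (V : set A) (m : nat) : set A :=
  kspan [set x | exists vs : seq A, size vs = m /\
            (forall v, v \in vs -> V v) /\ x = \prod_(v <- vs) v].

Definition fd_sub1 (V : set A) : Prop :=
  (exists s : seq A, V = kspan [set x | x \in s]) /\ V 1.

Definition GKdim (R : realType) : \bar R :=
  ereal_sup [set limn_esup
     (fun m : nat => (ln (fine (kdim R (spow V m))) / ln (m%:R : R))%:E)
     | V in fd_sub1].

Inductive subalg_gen (S : set A) : A -> Prop :=
  | sag_base x : S x -> subalg_gen S x
  | sag_one : subalg_gen S 1
  | sag_add x y : subalg_gen S x -> subalg_gen S y -> subalg_gen S (x + y)
  | sag_mul x y : subalg_gen S x -> subalg_gen S y -> subalg_gen S (x * y)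
  | sag_scale (c : k) x : subalg_gen S x -> subalg_gen S (c *: x).
End GK.

Definition is_ring_aut (L : fieldType) (g : L -> L) : Prop :=
  [/\ forall x y, g (x + y) = g x + g y, forall x y, g (x * y) = g x * g y,
      g 1 = 1 & bijective g].

Section Galois.
Variables (k : fieldType) (L : fieldType) (iota : k -> L) (n : nat)
          (phi : 'rV[int]_n -> L -> L).
(* M = phi (Z^n), elements of L*M are finitely supported functions Z^n -> L,
   f corresponds to  \sum_a f a * phi a *)

Definition fin_supp (f : 'rV[int]_n -> L) : Prop :=
  exists s : seq 'rV[int]_n, forall a, f a != 0 -> a \in s.

Definition frac_field (Gam : Type) (j : Gam -> L) : set L :=
  [set x | exists a b, j b != 0 /\ x = j a / j b].

Definition galK (K : set L) (g : L -> L) : Prop :=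
  is_ring_aut g /\ forall x, K x -> g x = x.

Definition Kcal (K : set L) (f : 'rV[int]_n -> L) : Prop :=
  fin_supp f /\
  forall g, galK K g -> forall a b,
    (forall x, phi b (g x) = g (phi a x)) -> f b = g (f a).

Definition KU (K : set L) (U : Type) (u : U -> 'rV[int]_n -> L)
  (f : 'rV[int]_n -> L) : Prop :=
  exists ps : seq (L * U), (forall p, List.In p ps -> K p.1) /\
    forall a, f a = \sum_(p <- ps) p.1 * u p.2 a.

Definition UK (K : set L) (U : Type) (u : U -> 'rV[int]_n -> L)
  (f : 'rV[int]_n -> L) : Prop :=
  exists ps : seq (L * U), (forall p, List.In p ps -> K p.1) /\
    forall a, f a = \sum_(p <- ps) u p.2 a * phi a p.1.
End Galois.

(* Main.v *)
Require Import Defs.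
From Stdlib Require List.
From Stdlib Require Import Lia.
From mathcomp Require Import zify ring.
From HB Require Import structures.
From mathcomp Require Import all_boot all_order all_algebra.
From mathcomp Require Import boolp classical_sets reals ereal sequences exp.
Import Order.TTheory GRing.Theory Num.Theory.
Local Open Scope ring_scope.
Local Open Scope classical_set_scope.
Set Implicit Arguments. Unset Strict Implicit. Unset Printing Implicit Defensive.
Section LinAlg.
Variables (k : fieldType) (A : algType k).
Implicit Types (S T : set A) (x y : A).

Lemma kspan_ind S (P : A -> Prop) : P 0 -> (forall x y, P x -> P y -> P (x + y)) ->
  (forall c x, S x -> P (c *: x)) -> forall x, kspan S x -> P x.
Proof.
move=> P0 PD PS x [ps [Hps ->]]; elim: ps Hps => [|p ps IH] H.
  by rewrite big_nil.
rewrite big_cons; apply: PD; first by apply: PS; apply: H; exact: mem_head.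
by apply: IH => q qin; apply: H; rewrite in_cons qin orbT.
Qed.

Lemma kspan0 S : kspan S 0.
Proof. by exists [::]; split => //; rewrite big_nil. Qed.

Lemma kspan_base S x : S x -> kspan S x.
Proof.
move=> Sx; exists [:: (1, x)]; split; first by move=> p; rewrite inE => /eqP ->.
by rewrite big_cons big_nil scale1r addr0.
Qed.

Lemma kspanD S x y : kspan S x -> kspan S y -> kspan S (x + y).
Proof.
move=> [p1 [H1 ->]] [p2 [H2 ->]]; exists (p1 ++ p2); split; last by rewrite big_cat.
by move=> p; rewrite mem_cat => /orP[]; [apply: H1|apply: H2].
Qed.

Lemma kspanZ S c x : kspan S x -> kspan S (c *: x).
Proof.
move=> [ps [H ->]]; exists [seq (c * p.1, p.2) | p <- ps]; split.
  by move=> p /mapP[q qin ->]; exact: (H q qin).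
by rewrite big_map scaler_sumr; apply: eq_bigr => p _; rewrite scalerA.
Qed.

Lemma kspanN S x : kspan S x -> kspan S (- x).
Proof. by move=> H; rewrite -scaleN1r; apply: kspanZ. Qed.

Lemma kspan_sum S (I : Type) (r : seq I) (F : I -> A) :
  (forall i, kspan S (F i)) -> kspan S (\sum_(i <- r) F i).
Proof.
move=> H; elim: r => [|i r IH]; first by rewrite big_nil; apply: kspan0.
by rewrite big_cons; apply: kspanD.
Qed.

Lemma kspan_mono S T : (forall x, S x -> T x) -> forall x, kspan S x -> kspan T x.
Proof.
move=> ST; apply: kspan_ind; [exact: kspan0|move=> *; exact: kspanD|].
by move=> c x Sx; apply: kspanZ; apply: kspan_base; apply: ST.
Qed.

Lemma kspan_kspan S x : kspan (kspan S) x -> kspan S x.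
Proof.
apply: kspan_ind; [exact: kspan0|move=> *; exact: kspanD|].
by move=> c y Hy; apply: kspanZ.
Qed.

Lemma kspan_coord (t : seq A) x : kspan [set y | y \in t] x ->
  exists c : 'I_(size t) -> k, x = \sum_(j < size t) c j *: t`_j.
Proof.
move: x; apply: kspan_ind.
- by exists (fun _ => 0); rewrite big1 // => j _; rewrite scale0r.
- move=> y z [c1 ->] [c2 ->]; exists (fun j => c1 j + c2 j).
  by rewrite -big_split; apply: eq_bigr => j _; rewrite scalerDl.
- move=> c y /= yin; have Hi : (index y t < size t)%N by rewrite index_mem.
  exists (fun j => if j == Ordinal Hi then c else 0).
  rewrite (bigD1 (Ordinal Hi)) //= eqxx nth_index // big1 ?addr0 // => j /negbTE ->.
  by rewrite scale0r.
Qed.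

Lemma nth_map_ord (R : zmodType) p (f : 'I_p -> R) (i : 'I_p) :
  (map f (enum 'I_p))`_i = f i.
Proof. by rewrite (nth_map i) ?size_enum_ord // nth_ord_enum. Qed.

Lemma lin_indep_nil : lin_indep ([::] : seq A).
Proof. by move=> cs _ _ i. Qed.

Lemma indep_size (t ws : seq A) : lin_indep ws ->
  (forall w, w \in ws -> kspan [set y | y \in t] w) -> (size ws <= size t)%N.
Proof.
move=> Hind Hsp; rewrite leqNgt; apply/negP => Hlt.
pose p := size ws; pose q := size t.
have Hc : forall i : 'I_p, exists c : 'I_q -> k, ws`_i = \sum_(j < q) c j *: t`_j.
  by move=> i; apply: kspan_coord; apply: Hsp; apply: mem_nth.
have [C HC] := choice Hc.
pose M := \matrix_(i < p, j < q) C i j.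
have nfree : ~~ row_free M.
  rewrite /row_free; apply/negP => /eqP Hr.
  by have := rank_leq_col M; rewrite Hr leqNgt Hlt.
have : kermx M != 0 by rewrite kermx_eq0.
move=> /rowV0Pn[v /sub_kermxP vM vn0].
pose cs := map (v 0) (enum 'I_p).
have Hsz : size cs = size ws by rewrite size_map size_enum_ord.
have Hsum : \sum_(i < size ws) cs`_i *: ws`_i = 0.
  transitivity (\sum_(i < p) \sum_(j < q) (v 0 i * C i j) *: t`_j).
    apply: eq_bigr => i _; rewrite nth_map_ord HC scaler_sumr.
    by apply: eq_bigr => j _; rewrite scalerA.
  rewrite exchange_big /=; apply: big1 => j _.
  rewrite -scaler_suml.
  have := congr1 (fun m : 'M_(1, q) => m 0 j) vM; rewrite !mxE => H0.
  have H1 : \sum_(i < p) v 0 i * C i j = 0.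
    by apply: (etrans _ H0); apply: eq_bigr => i _; rewrite /M mxE.
  by rewrite H1 scale0r.
have := Hind cs Hsz Hsum; move=> Hz; apply/negP: vn0; apply/negPn/eqP.
apply/rowP => i; rewrite mxE; have := Hz i (ltn_ord i).
by rewrite nth_map_ord => ->.
Qed.
Lemma indep_fin (I : finType) (f : I -> A) :
  (forall c : I -> k, \sum_i c i *: f i = 0 -> forall i, c i = 0) ->
  lin_indep [seq f i | i <- enum I].
Proof.
move=> H cs Hsz Hsum i Hi.
have Hsw : size [seq f i | i <- enum I] = #|I| by rewrite size_map -cardE.
pose c := fun z : I => cs`_(enum_rank z).
have Hc : \sum_(z : I) c z *: f z = 0.
  apply: etrans _ Hsum; rewrite (reindex (@enum_val _ I)); last first.
    by apply: onW_bij; exact: enum_val_bij.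
  rewrite -(big_mkord xpredT (fun j => cs`_j *: [seq f i | i <- enum I]`_j)) Hsw big_mkord.
  apply: eq_bigr => j _; rewrite /c enum_valK; congr (_ *: _).
  by rewrite nth_image.
have Hi' : (i < #|I|)%N by rewrite -Hsw.
have := H c Hc (enum_val (Ordinal Hi')); rewrite /c enum_valK //.
Qed.

End LinAlg.

Section KdimSpow.
Variables (k : fieldType) (A : algType k) (R : realType).
Implicit Types (V W : set A) (x y : A).
Local Open Scope ereal_scope.

Lemma kdim_ge V ws : lin_indep ws -> (forall w, w \in ws -> V w) ->
  ((size ws)%:R)%:E <= kdim R V.
Proof. by move=> Hi Hw; apply: ereal_sup_ubound; exists ws. Qed.

Lemma kdim_attained V (t : seq A) :
  (forall x, V x -> kspan [set y | y \in t] x) ->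
  exists ws, [/\ lin_indep ws, (forall w, w \in ws -> V w) &
                 kdim R V = ((size ws)%:R)%:E].
Proof.
move=> HV.
pose P := fun m => `[< exists ws, lin_indep ws /\ (forall w, w \in ws -> V w) /\ size ws = m >].
have P0 : exists m, P m.
  by exists 0%N; apply/asboolP; exists [::]; split; [exact: lin_indep_nil|].
have Pub : forall m, P m -> (m <= size t)%N.
  move=> m /asboolP [ws [Hi [Hw <-]]]; apply: indep_size Hi _ => w /Hw; exact: HV.
case: (ex_maxnP P0 Pub) => m /asboolP [ws [Hi [Hw Hs]]] Hmax.
exists ws; split => //; apply/eqP; rewrite eq_le; apply/andP; split.
- apply: ge_ereal_sup => _ [ws' [Hi' Hw'] <-]; rewrite lee_fin ler_nat Hs.
  by apply: Hmax; apply/asboolP; exists ws'.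
- exact: kdim_ge.
Qed.
End KdimSpow.

Section Spow.
Variables (k : fieldType) (A : algType k).
Implicit Types (S T V W : set A) (x y : A).

Lemma kspan_mul S T x y : kspan S x -> kspan T y ->
  kspan [set z | exists a b, S a /\ T b /\ z = a * b] (x * y).
Proof.
move=> Hx Hy; move: x Hx; apply: kspan_ind.
- by rewrite mul0r; apply: kspan0.
- by move=> x1 x2 H1 H2; rewrite mulrDl; apply: kspanD.
- move=> c a Sa; rewrite -scalerAl; apply: kspanZ.
  move: y Hy; apply: kspan_ind.
  + by rewrite mulr0; apply: kspan0.
  + by move=> y1 y2 H1 H2; rewrite mulrDr; apply: kspanD.
  + move=> c' b Tb; rewrite -scalerAr; apply: kspanZ; apply: kspan_base.
    by exists a, b.
Qed.

Lemma spow_word V (vs : seq A) m : size vs = m -> (forall v, v \in vs -> V v) ->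
  spow V m (\prod_(v <- vs) v).
Proof. by move=> Hs Hv; apply: kspan_base; exists vs. Qed.

Lemma spow_kspan V m x : kspan (spow V m) x -> spow V m x.
Proof. exact: kspan_kspan. Qed.

Lemma spow0 V m : spow V m 0.
Proof. exact: kspan0. Qed.

Lemma spowD V m x y : spow V m x -> spow V m y -> spow V m (x + y).
Proof. exact: kspanD. Qed.

Lemma spowZ V m c x : spow V m x -> spow V m (c *: x).
Proof. exact: kspanZ. Qed.

Lemma spow_sum V m (I : Type) (r : seq I) (F : I -> A) :
  (forall i, spow V m (F i)) -> spow V m (\sum_(i <- r) F i).
Proof. exact: kspan_sum. Qed.

Lemma spow_mul V a b x y : spow V a x -> spow V b y -> spow V (a + b) (x * y).
Proof.
move=> Hx Hy; apply: kspan_mono (kspan_mul Hx Hy) => z [p [q [Hp [Hq ->]]]].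
case: Hp => vs [Hvs [HvV ->]]; case: Hq => ws [Hws [HwV ->]].
exists (vs ++ ws); split; first by rewrite size_cat Hvs Hws.
split; last by rewrite big_cat.
by move=> v; rewrite mem_cat => /orP[]; [apply: HvV|apply: HwV].
Qed.

Lemma spow1 V x : V x -> spow V 1 x.
Proof.
move=> Vx; have -> : x = \prod_(v <- [:: x]) v by rewrite big_seq1.
by apply: spow_word => // v; rewrite inE => /eqP ->.
Qed.

Lemma spowX V x m : V x -> spow V m (x ^+ m).
Proof.
move=> Vx; elim: m => [|m IH].
  have -> : x ^+ 0 = \prod_(v <- [::]) v by rewrite big_nil expr0.
  by apply: spow_word.
by rewrite exprS -add1n; apply: spow_mul => //; apply: spow1.
Qed.

Lemma spow_one V m : V 1 -> spow V m 1.
Proof. by move=> V1; rewrite -(expr1n A m); apply: spowX. Qed.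

Lemma spow_spow V a m x : spow V (a * m) x -> spow (spow V a) m x.
Proof.
elim: m x => [|m IH] x.
  rewrite muln0; apply: kspan_mono => z [vs [Hs [_ ->]]].
  by exists vs; split => //; split => // v; move: Hs => /size0nil ->.
rewrite mulnS; apply: kspan_ind.
- exact: spow0.
- by move=> *; apply: spowD.
- move=> c z [vs [Hs [HV ->]]]; apply: spowZ.
  rewrite -(cat_take_drop a vs) big_cat -add1n; apply: spow_mul.
    apply: spow1; apply: spow_word; first by rewrite size_take Hs; case: ifP => // /negbT h; lia.
    by move=> v /mem_take; apply: HV.
  apply: IH; apply: spow_word; first by rewrite size_drop Hs addKn.
  by move=> v /mem_drop; apply: HV.
Qed.

Fixpoint words (t : seq A) m : seq (seq A) :=
  if m is m'.+1 then [seq x :: w | x <- t, w <- words t m'] else [:: [::]].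
Definition wprods (t : seq A) m := [seq \prod_(v <- w) v | w <- words t m].

Lemma words_spec t m w : w \in words t m ->
  size w = m /\ forall v, v \in w -> v \in t.
Proof.
elim: m w => [|m IH] w /=; first by rewrite inE => /eqP ->.
move=> /allpairsP[[x w'] [/= xin win ->]]; have [Hs Hv] := IH _ win.
split; first by rewrite /= Hs.
by move=> v; rewrite inE => /orP[/eqP ->|]; [|apply: Hv].
Qed.

Lemma words_mem t w : (forall v, v \in w -> v \in t) -> w \in words t (size w).
Proof.
elim: w => [|x w IH] H /=; first by rewrite inE.
apply: allpairs_f; first by apply: H; exact: mem_head.
by apply: IH => v vin; apply: H; rewrite inE vin orbT.
Qed.

Lemma spow_fin (t : seq A) m x : spow (kspan [set y | y \in t]) m x ->
  kspan [set y | y \in wprods t m] x.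
Proof.
apply: kspan_ind; [exact: kspan0|by move=> *; apply: kspanD|].
move=> c z [vs [Hs [HV ->]]]; apply: kspanZ.
elim: vs m Hs HV => [|v vs IH] m Hs HV.
  rewrite -Hs; apply: kspan_base; rewrite /wprods /=; exact: mem_head.
rewrite big_cons -Hs /=.
have Hv : kspan [set y | y \in t] v by apply: HV; exact: mem_head.
have Hvs : kspan [set y | y \in wprods t (size vs)] (\prod_(v <- vs) v).
  by apply: IH => // w win; apply: HV; rewrite inE win orbT.
apply: kspan_mono (kspan_mul Hv Hvs) => z' [a [b [/= ain [/mapP [w win ->] ->]]]].
rewrite /wprods /=; have -> : a * \prod_(v <- w) v = \prod_(v <- a :: w) v by rewrite big_cons.
apply: map_f; exact: allpairs_f.
Qed.

Lemma spow_kspan_eq (t : seq A) m :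
  spow (kspan [set y | y \in t]) m = kspan [set y | y \in wprods t m].
Proof.
apply/seteqP; split => x; first exact: spow_fin.
move=> Hx; apply: spow_kspan; apply: kspan_mono Hx => z /mapP[w win ->].
have [Hs Hv] := words_spec win.
apply: spow_word => // v /Hv vin; apply: kspan_base.
exact: vin.
Qed.

End Spow.

Section Additive.
Variables (V W : zmodType) (D : V -> W).
Hypothesis (HD : forall x y, D (x + y) = D x + D y).

Lemma aD0 : D 0 = 0.
Proof. by apply: (@addrI _ (D 0)); rewrite addr0 -HD addr0. Qed.

Lemma aDN x : D (- x) = - D x.
Proof. by apply/eqP; rewrite -subr_eq0 opprK -HD addNr aD0. Qed.

Lemma aDB x y : D (x - y) = D x - D y.
Proof. by rewrite HD aDN. Qed.

Lemma aDMn x m : D (x *+ m) = D x *+ m.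
Proof. by elim: m => [|m IH]; rewrite ?mulr0n ?aD0 // !mulrS HD IH. Qed.

Lemma aDMz x z : D (x *~ z) = D x *~ z.
Proof.
case: z => m; first by rewrite -!pmulrn aDMn.
by rewrite !NegzE !mulrNz aDN -!pmulrn aDMn.
Qed.

Lemma aDsum (I : Type) (r : seq I) (F : I -> V) :
  D (\sum_(i <- r) F i) = \sum_(i <- r) D (F i).
Proof.
elim: r => [|i r IH]; first by rewrite !big_nil aD0.
by rewrite !big_cons HD IH.
Qed.
End Additive.

Lemma row_expand (n : nat) (x : 'rV[int]_n) :
  x = \sum_(i < n) delta_mx 0 i *~ x 0 i.
Proof.
rewrite {1}(row_sum_delta x); apply: eq_bigr => i _.
by rewrite -scaler_int intz.
Qed.

Lemma aD_expand (n : nat) (D : 'rV[int]_n -> 'rV[int]_n) :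
  (forall x y, D (x + y) = D x + D y) ->
  forall x, D x = \sum_(i < n) D (delta_mx 0 i) *~ x 0 i.
Proof.
move=> HD x; rewrite {1}(row_expand x) aDsum //; apply: eq_bigr => i _.
by rewrite aDMz.
Qed.

Lemma poly_avoid (n : nat) (ds : seq 'rV[int]_n) :
  (forall d, d \in ds -> d != 0) ->
  exists t : int, forall d, d \in ds -> \sum_(i < n) d 0 i * t ^+ i != 0.
Proof.
move=> Hds.
pose p (d : 'rV[int]_n) : {poly int} :=
  \poly_(i < n) (map (d 0) (enum 'I_n))`_i.
have pn0 : forall d, d \in ds -> p d != 0.
  move=> d /Hds dn0; apply/negP => /eqP pd0; apply/negP: dn0; apply/negPn/eqP.
  apply/rowP => i; rewrite mxE.
  have := congr1 (fun q : {poly int} => q`_i) pd0.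
  by rewrite /= coef_poly ltn_ord coef0 nth_map_ord.
pose P := \prod_(d <- ds) p d.
have Pn0 : P != 0 by rewrite prodf_seq_neq0; apply/allP => d /pn0.
pose rs := [seq i%:Z | i <- iota 0 (size P)].
have Hu : uniq rs by rewrite map_inj_uniq ?iota_uniq // => a b [].
have : ~~ all (root P) rs.
  apply/negP => Hall; have := max_poly_roots Pn0 Hall Hu.
  by rewrite size_map size_iota ltnn.
move=> /allPn[t _ Ht]; exists t => d din.
have : P.[t] != 0 by exact: Ht.
rewrite horner_prod prodf_seq_neq0 => /allP /(_ d din) /=.
rewrite horner_poly; congr (_ != _); apply: eq_bigr => i _.
by rewrite nth_map_ord.
Qed.

Lemma aD_expandZ (n : nat) (D : 'rV[int]_n -> 'rV[int]_n) :
  (forall x y, D (x + y) = D x + D y) ->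
  forall x, D x = \sum_(i < n) x 0 i *: D (delta_mx 0 i).
Proof.
move=> HD x; rewrite (aD_expand HD x); apply: eq_bigr => i _.
by rewrite -scaler_int intz.
Qed.

Lemma In_nth (T : Type) (d : T) (s : seq T) x : List.In x s ->
  exists i, (i < size s)%N /\ nth d s i = x.
Proof.
elim: s => [|y s IH] //= [->|/IH [i [Hi Hn]]]; first by exists 0%N.
by exists i.+1.
Qed.

Lemma In_map (T : Type) (V : eqType) (f : T -> V) (s : seq T) x :
  List.In x s -> f x \in map f s.
Proof.
elim: s => [|y s IH] //= [->|/IH H]; first exact: mem_head.
by rewrite inE H orbT.
Qed.

Section Asym.
Variable R : realType.
Local Open Scope ereal_scope.

Lemma sup_add_le (S : set (\bar R)) (c : R) T :
  (forall x, S x -> x + c%:E <= T) -> ereal_sup S + c%:E <= T.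
Proof.
move=> H; rewrite -leeBrDr //; apply: ge_ereal_sup => x Sx.
by rewrite leeBrDr //; exact: H.
Qed.

Lemma limsup_shift_le (r s : (\bar R)^nat) (c : R) N :
  (forall m, (N <= m)%N -> r m + c%:E <= s m) -> limn_esup r + c%:E <= limn_esup s.
Proof.
move=> H; rewrite !limn_esup_lim.
have Er : limn (esups r) = ereal_inf (range (esups r)).
  by apply/cvg_lim => //; exact: cvg_esups_inf.
have Es : limn (esups s) = ereal_inf (range (esups s)).
  by apply/cvg_lim => //; exact: cvg_esups_inf.
rewrite Er Es; apply: le_ereal_inf_tmp => _ [m _ <-].
pose m' := maxn m N.
apply: (@le_trans _ _ (esups r m' + c%:E)).
  by apply: leeD2r; apply: ereal_inf_lbound; exists m'.
apply: (@le_trans _ _ (esups s m')); last by apply: nonincreasing_esups; rewrite leq_maxl.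
apply: sup_add_le => _ [k /= Hk <-]; apply: le_trans (H k _) _.
  by apply: leq_trans Hk; rewrite leq_maxr.
by apply: ereal_sup_ubound; exists k.
Qed.
End Asym.

Section Main.
Variables (R : realType) (k : closedFieldType) (L : fieldType) (iota : {rmorphism k -> L})
  (n : nat) (phi : 'rV[int]_n -> L -> L)
  (Gam : comAlgType k) (U : algType k) (e : {lrmorphism Gam -> U})
  (u : U -> 'rV[int]_n -> L) (j : Gam -> L).
Hypothesis (Gam_nontriv : (1 : Gam) != 0).
Hypothesis (e_inj : injective e).
Hypothesis (phi_aut : forall a, is_ring_aut (phi a)).
Hypothesis (phi0 : forall x, phi 0 x = x).
Hypothesis (phiD : forall a b x, phi (a + b) x = phi a (phi b x)).
Hypothesis (phi_sep : forall a b, (forall x, frac_field j x -> phi a x = phi b x) -> a = b).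
Hypothesis (u_inj : injective u).
Hypothesis (u_fin : forall v, fin_supp (u v)).
Hypothesis (u1 : forall a, u 1 a = if a == 0 then 1 else 0).
Hypothesis (uD : forall v w a, u (v + w) a = u v a + u w a).
Hypothesis (uZ : forall (c : k) v a, u (c *: v) a = iota c * u v a).
Hypothesis (uM : forall v w (s : seq 'rV[int]_n), uniq s ->
      (forall a, u v a != 0 -> a \in s) ->
      forall c, u (v * w) c = \sum_(a <- s) u v a * phi a (u w (c - a))).
Hypothesis (u_Gam : forall g a, u (e g) a = if a == 0 then j g else 0).

Lemma u0 a : u 0 a = 0.
Proof. by apply: (@addrI _ (u 0 a)); rewrite addr0 -uD addr0. Qed.

Lemma u_sum (I : Type) (r : seq I) (F : I -> U) a :
  u (\sum_(i <- r) F i) a = \sum_(i <- r) u (F i) a.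
Proof.
elim: r => [|i r IH]; first by rewrite !big_nil u0.
by rewrite !big_cons uD IH.
Qed.

Lemma phiA0 a : phi a 0 = 0.
Proof.
have [H _ _ _] := phi_aut a.
by apply: (@addrI _ (phi a 0)); rewrite addr0 -H addr0.
Qed.

Lemma phi_inj a : injective (phi a).
Proof. by have [_ _ _ /bij_inj] := phi_aut a. Qed.

Lemma phi_neq0 a x : x != 0 -> phi a x != 0.
Proof. by apply: contra => /eqP H; apply/eqP; rewrite -(phiA0 a) in H; exact: phi_inj H. Qed.

Lemma ueM g w c : u (e g * w) c = j g * u w c.
Proof.
have H : forall a, u (e g) a != 0 -> a \in [:: 0].
  move=> a; rewrite u_Gam; have [->|Ha] := eqVneq a 0; first by rewrite mem_head.
  by rewrite eqxx.
have Hu : uniq [:: (0 : 'rV[int]_n)] by [].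
by rewrite (uM w Hu H) big_seq1 u_Gam eqxx phi0 subr0.
Qed.

Lemma jE g : j g = u (e g) 0.
Proof. by rewrite u_Gam eqxx. Qed.

Lemma jD g h : j (g + h) = j g + j h.
Proof. by rewrite !jE rmorphD uD. Qed.

Lemma j0 : j 0 = 0.
Proof. by rewrite jE rmorph0 u0. Qed.

Lemma jM g h : j (g * h) = j g * j h.
Proof. by rewrite !jE rmorphM ueM jE. Qed.

Lemma j1 : j 1 = 1.
Proof. by rewrite jE rmorph1 u1 eqxx. Qed.

Lemma jeq0 g : j g = 0 -> g = 0.
Proof.
move=> Hg; apply: e_inj; rewrite rmorph0; apply: u_inj; apply: funext => a.
by rewrite u_Gam u0 Hg; case: eqP.
Qed.

Lemma jneq0 g : g != 0 -> j g != 0.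
Proof. by apply: contra => /eqP /jeq0 ->. Qed.

Lemma clear_denoms f : KU (frac_field j) u f ->
  exists d y, j d != 0 /\ forall a, u y a = j d * f a.
Proof.
move=> [ps [HK Hf]].
suff [d [y [Hd Hy]]] : exists d y, j d != 0 /\
   forall a, u y a = j d * \sum_(p <- ps) p.1 * u p.2 a.
  by exists d, y; split => // a; rewrite Hf.
elim: ps HK {Hf} => [|[x w] ps IH] HK.
  exists 1, 0; split; first by rewrite j1 oner_eq0.
  by move=> a; rewrite u0 big_nil mulr0.
have [|d [y [Hd Hy]]] := IH; first by move=> p Hp; apply: HK; right.
have [a0 [b0 [Hb0 Hx]]] : frac_field j x by apply: (HK (x, w)); left.
exists (b0 * d), (e (a0 * d) * w + e b0 * y); split.
  by rewrite jM mulf_neq0.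
move=> a; rewrite uD !ueM Hy big_cons /= Hx !jM.
by field.
Qed.

Section Top.
Variable (lam : 'rV[int]_n -> int).
Hypothesis (lamD : forall x y, lam (x + y) = lam x + lam y).

Lemma lamB x y : lam (x - y) = lam x - lam y.
Proof. by apply/eqP; rewrite eq_sym subr_eq -lamD subrK. Qed.

Definition top (y : U) (P : 'rV[int]_n) :=
  u y P != 0 /\ forall c, u y c != 0 -> c != P -> lam c < lam P.

Lemma top1 : top 1 0.
Proof.
split; first by rewrite u1 eqxx oner_eq0.
by move=> c; rewrite u1; have [->|_] := eqVneq c 0; rewrite ?eqxx.
Qed.

Lemma supp_list y : exists s, uniq s /\ forall a, u y a != 0 -> a \in s.
Proof.
have [s Hs] := u_fin y; exists (undup s); split; first exact: undup_uniq.
by move=> a /Hs; rewrite mem_undup.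
Qed.

Lemma top_mul y z P Q : top y P -> top z Q -> top (y * z) (P + Q).
Proof.
move=> [HyP Hy] [HzQ Hz]; have [s [Hs Hsupp]] := supp_list y.
split.
  rewrite (uM z Hs Hsupp) (bigD1_seq P) //=; last exact: Hsupp.
  rewrite big1 ?addr0; first by rewrite addrC addKr mulf_neq0 // phi_neq0.
  move=> a Ha; have [->|Hya] := eqVneq (u y a) 0; first by rewrite mul0r.
  have Hlt := Hy a Hya Ha.
  have [Hz0|Hzn] := eqVneq (u z (P + Q - a)) 0; first by rewrite Hz0 phiA0 mulr0.
  exfalso; have [HQ|HQ] := eqVneq (P + Q - a) Q.
    have := congr1 (fun x => x + a - Q) HQ; rewrite /= subrK addrK (addrC Q a) addrK.
    by move=> HPa; move: Ha; rewrite HPa eqxx.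
  by have := Hz _ Hzn HQ; rewrite !lamB !lamD; lia.
move=> c Hc HcPQ; rewrite (uM z Hs Hsupp) in Hc.
have [a ain Ha] : exists2 a, a \in s & u y a * phi a (u z (c - a)) != 0.
  case: (pselect (exists2 a, a \in s & u y a * phi a (u z (c - a)) != 0)) => // Hn.
  move: Hc; rewrite big1_seq ?eqxx // => a ain; apply/eqP.
  by case: eqP => // /eqP Ha; exfalso; apply: Hn; exists a.
have Hya : u y a != 0 by apply: contraNneq Ha => ->; rewrite mul0r.
have Hza : u z (c - a) != 0 by apply: contraNneq Ha => ->; rewrite phiA0 mulr0.
have Hc' : c = a + (c - a) by rewrite addrC subrK.
have -> : lam c = lam a + lam (c - a) by rewrite lamB addrC subrK.
rewrite (lamD P Q).
have [HaP|HaP] := eqVneq a P.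
  have [HcQ|HcQ] := eqVneq (c - a) Q.
    by move: HcPQ; rewrite Hc' HcQ HaP eqxx.
  by have := Hz _ Hza HcQ; rewrite HaP; lia.
have := Hy _ Hya HaP; have [HcQ|HcQ] := eqVneq (c - a) Q; first by rewrite HcQ; lia.
by have := Hz _ Hza HcQ; lia.
Qed.

Lemma top_eM g y P : j g != 0 -> top y P -> top (e g * y) P.
Proof.
move=> Hg [HP H]; split; first by rewrite ueM mulf_neq0.
by move=> c; rewrite ueM => Hc; apply: H; apply: contraNneq Hc => ->; rewrite mulr0.
Qed.

Lemma top_exp y P m : top y P -> top (y ^+ m) (P *+ m).
Proof.
move=> H; elim: m => [|m IH]; first by rewrite expr0 mulr0n; exact: top1.
by rewrite exprS mulrS; apply: top_mul.
Qed.

Lemma top_prod (I : Type) (r : seq I) (F : I -> U) (Pf : I -> 'rV[int]_n) :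
  (forall i, top (F i) (Pf i)) -> top (\prod_(i <- r) F i) (\sum_(i <- r) Pf i).
Proof.
move=> H; elim: r => [|i r IH]; first by rewrite !big_nil; exact: top1.
by rewrite !big_cons; apply: top_mul.
Qed.

Lemma indep_family (vs : seq Gam) (I : finType) (Y : I -> U) (P : I -> 'rV[int]_n) :
  lin_indep vs -> (forall r, top (Y r) (P r)) -> injective P ->
  lin_indep [seq e (vs`_x.1) * Y x.2 | x : ('I_(size vs) * I)%type <- enum {: 'I_(size vs) * I}].
Proof.
move=> Hind Htop Pinj; apply: indep_fin => c Hc [i r].
pose s r := \sum_(i < size vs) c (i, r) *: vs`_i.
have Hsum : \sum_r e (s r) * Y r = 0.
  apply: etrans _ Hc.
  transitivity (\sum_(i < size vs) \sum_r c (i, r) *: (e vs`_i * Y r)).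
    rewrite exchange_big /=; apply: eq_bigr => r' _.
    by rewrite /s linear_sum mulr_suml; apply: eq_bigr => i' _; rewrite linearZ scalerAl.
  by rewrite pair_big /=; apply: eq_bigr => [[i' r']] _.
have Hs0 : forall r1, s r1 = 0.
  move=> r0; apply/eqP; apply/negPn/negP => Hr0.
  case: (@arg_maxP _ _ I r0 (fun r => s r != 0) (fun r => lam (P r)) Hr0) => rm Hrm Hmax.
  have := congr1 (fun y => u y (P rm)) Hsum; rewrite /= u0 u_sum (bigD1 rm) //= big1 ?addr0.
    by rewrite ueM; apply/eqP; rewrite mulf_neq0 //; [exact: jneq0|case: (Htop rm)].
  move=> r2 Hr; rewrite ueM; have [->|Hsr] := eqVneq (s r2) 0; first by rewrite j0 mul0r.
  have [->|HY] := eqVneq (u (Y r2) (P rm)) 0; first by rewrite mulr0.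
  exfalso; have HP : P rm != P r2 by apply: contraNneq Hr => /Pinj ->.
  have := (Htop r2).2 _ HY HP; have := Hmax r2 Hsr => /=; lia.
have := Hind [seq c (i', r) | i' <- enum 'I_(size vs)].
rewrite size_map size_enum_ord => /(_ erefl).
have -> : \sum_(i0 < size vs) [seq c (i', r) | i' <- enum 'I_(size vs)]`_i0 *: vs`_i0 = s r.
  by apply: eq_bigr => i' _; rewrite nth_map_ord.
by move=> /(_ (Hs0 r) i (ltn_ord i)); rewrite nth_map_ord.
Qed.

End Top.

Lemma e_spow (V : set Gam) (W : set U) m x : (forall v, V v -> W (e v)) ->
  spow V m x -> spow W m (e x).
Proof.
move=> HVW; move: x; apply: kspan_ind.
- by rewrite rmorph0; apply: spow0.
- by move=> x y Hx Hy; rewrite rmorphD; apply: spowD.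
- move=> c z [vs [Hs [HV ->]]]; rewrite linearZ; apply: spowZ.
  rewrite rmorph_prod.
  have -> : \prod_(i <- vs) e i = \prod_(w <- map e vs) w by rewrite big_map.
  apply: spow_word; first by rewrite size_map.
  by move=> w /mapP[v vin ->]; apply: HVW; apply: HV.
Qed.


Hypothesis (G_M : forall g, galK (frac_field j) g -> forall a,
      exists b, forall x, phi b (g x) = g (phi a x)).
Hypothesis (KU_eq : forall f, KU (frac_field j) u f <-> Kcal phi (frac_field j) f).

Local Notation K := (frac_field j).

Lemma galK0 g : galK K g -> g 0 = 0.
Proof. by move=> [[HD _ _ _] _]; apply: (@addrI _ (g 0)); rewrite addr0 -HD addr0. Qed.

Lemma galK1 g : galK K g -> g 1 = 1.
Proof. by move=> [[_ _ H1 _] _]. Qed.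

Lemma galK_ext g g' : galK K g -> g =1 g' -> galK K g'.
Proof.
move=> [[HD HM H1 [h Hh1 Hh2]] HKf] Hg; split; first split.
- by move=> x y; rewrite -!Hg.
- by move=> x y; rewrite -!Hg.
- by rewrite -Hg.
- by exists h => x; rewrite -Hg ?Hh1 ?Hh2.
- by move=> x Kx; rewrite -Hg HKf.
Qed.

Lemma galK_comp g h : galK K g -> galK K h -> galK K (g \o h).
Proof.
move=> [[gD gM g1 gB] gK] [[hD hM h1 hB] hK]; split; first split.
- by move=> x y /=; rewrite hD gD.
- by move=> x y /=; rewrite hM gM.
- by rewrite /= h1 g1.
- exact: bij_comp.
- by move=> x Kx /=; rewrite hK ?gK.
Qed.

Lemma galK_id : galK K id.
Proof. by split; [split => //; exists id|]. Qed.

Lemma galK_inv g : galK K g -> exists g', [/\ galK K g', cancel g g' & cancel g' g].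
Proof.
move=> [[gD gM g1 [h Hh1 Hh2]] gK]; exists h; split => //; split; first split.
- by move=> x y; apply: (can_inj Hh1); rewrite gD !Hh2.
- by move=> x y; apply: (can_inj Hh1); rewrite gM !Hh2.
- by apply: (can_inj Hh1); rewrite g1 Hh2.
- by exists g.
- by move=> x Kx; apply: (can_inj Hh1); rewrite Hh2 gK.
Qed.

Definition act (g : L -> L) (a : 'rV[int]_n) : 'rV[int]_n :=
  match pselect (exists b, forall x, phi b (g x) = g (phi a x)) with
  | left H => proj1_sig (cid H)
  | right _ => a
  end.

Lemma act_spec g a : galK K g -> forall x, phi (act g a) (g x) = g (phi a x).
Proof.
move=> Hg; rewrite /act; case: pselect => [H|H]; first exact: proj2_sig (cid H).
by exfalso; apply: H; apply: G_M.
Qed.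

Lemma act_uniq g a b : galK K g -> (forall x, phi b (g x) = g (phi a x)) ->
  act g a = b.
Proof.
move=> Hg Hb; apply: phi_sep => x _.
have [[_ _ _ [h _ Hh2]] _] := Hg.
by rewrite -[x]Hh2 act_spec // Hb.
Qed.

Lemma actD g a b : galK K g -> act g (a + b) = act g a + act g b.
Proof.
move=> Hg; apply: act_uniq => // x.
by rewrite !phiD !act_spec.
Qed.

Lemma act_comp g h a : galK K g -> galK K h -> act (g \o h) a = act g (act h a).
Proof.
move=> Hg Hh; apply: act_uniq; first exact: galK_comp.
by move=> x /=; rewrite act_spec // act_spec.
Qed.

Lemma act_id a : act id a = a.
Proof. by apply: act_uniq => //; exact: galK_id. Qed.

Lemma act_ext g g' a : galK K g -> g =1 g' -> act g a = act g' a.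
Proof.
move=> Hg Hgg'; have Hg' := galK_ext Hg Hgg'.
by symmetry; apply: act_uniq => // x; rewrite -!Hgg' act_spec.
Qed.

Lemma act_cancel g g' a : galK K g -> galK K g' -> cancel g' g ->
  act g (act g' a) = a.
Proof.
move=> Hg Hg' Hc; rewrite -act_comp //.
by rewrite (act_ext _ (g' := id)) ?act_id //; exact: galK_comp.
Qed.

Section Orbits.
Variable (gs : seq (L -> L)).
Hypothesis (Hgs : forall g, galK K g -> exists2 g', List.In g' gs & g =1 g').

Definition orb (p c : 'rV[int]_n) : Prop := exists g, galK K g /\ c = act g p.

Definition ind (p : 'rV[int]_n) (c : 'rV[int]_n) : L := if `[< orb p c >] then 1 else 0.

Lemma ind_Kcal p : Kcal phi K (ind p).
Proof.
split.
  exists [seq act g p | g <- gs] => c; rewrite /ind; case: asboolP => [[g [Hg ->]] _|]; last by rewrite eqxx.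
  have [g' Hin Hgg'] := Hgs Hg; rewrite (@act_ext g g' p Hg Hgg'); exact: In_map.
move=> g Hg a b Hab; have -> : b = act g a by symmetry; apply: act_uniq.
have [g' [Hg' Hc1 Hc2]] := galK_inv Hg.
have E1 : orb p (act g a) -> orb p a.
  move=> [h [Hh Hah]]; exists (g' \o h); split; first exact: galK_comp.
  by rewrite act_comp // -Hah act_cancel.
have E2 : orb p a -> orb p (act g a).
  move=> [h [Hh ->]]; exists (g \o h); split; first exact: galK_comp.
  by rewrite act_comp.
rewrite /ind; case: asboolP => [/E1 H|H]; case: asboolP => // H'.
- by rewrite galK1.
- by exfalso; apply: H; apply: E2.
- by rewrite galK0.
Qed.

Lemma top_exists (lam : 'rV[int]_n -> int) p :
  (forall g, galK K g -> act g p != p -> lam (act g p) < lam p) ->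
  exists y : U, top lam y p.
Proof.
move=> Hmax; have HKU := (KU_eq (ind p)).2 (ind_Kcal p).
have [d [y [Hd Hy]]] := clear_denoms HKU.
exists y; split.
  rewrite Hy /ind; case: asboolP => [_|H]; first by rewrite mulr1.
  by exfalso; apply: H; exists id; split; [exact: galK_id|rewrite act_id].
move=> c; rewrite Hy /ind; case: asboolP => [[g [Hg ->]] _ Hne|_].
  exact: Hmax.
by rewrite mulr0 eqxx.
Qed.

Definition G (i : 'I_(size gs)) : L -> L := nth id gs i.

Lemma rep g : galK K g -> exists i, galK K (G i) /\ G i =1 g.
Proof.
move=> Hg; have [g' Hin Hgg'] := Hgs Hg; have [i [Hi Hn]] := In_nth id Hin.
exists (Ordinal Hi); rewrite /G /= Hn; split; first exact: galK_ext Hg Hgg'.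
by move=> x; rewrite Hgg'.
Qed.

Definition bt (t : int) : 'rV[int]_n := \row_l t ^+ l.

Lemma choose_b0 : exists b0, forall g h, galK K g -> galK K h ->
  act g b0 = act h b0 -> forall x, act g x = act h x.
Proof.
pose bad (p : 'I_(size gs) * 'I_(size gs)) := galK K (G p.1) /\ galK K (G p.2) /\
  exists x, act (G p.1) x != act (G p.2) x.
have Hd : forall p, exists dv : 'rV[int]_n, bad p -> dv != 0 /\
    forall t, \sum_(l < n) dv 0 l * t ^+ l != 0 -> act (G p.1) (bt t) != act (G p.2) (bt t).
  move=> p; case: (pselect (bad p)) => [[H1 [H2 [x Hx]]]|Hnb]; last by exists 0.
  pose D := fun y => act (G p.1) y - act (G p.2) y.
  have HD : forall y z, D (y + z) = D y + D z.
    by move=> y z; rewrite /D !actD // opprD addrACA.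
  have [l Hl] : exists l, D (delta_mx 0 l) != 0.
    case: (pselect (exists l, D (delta_mx 0 l) != 0)) => // Hn; exfalso.
    move: Hx; rewrite -subr_eq0 -/(D x) (aD_expandZ HD) big1 ?eqxx // => l _.
    have -> : D (delta_mx 0 l) = 0.
      by case: (eqVneq (D (delta_mx 0 l)) 0) => // H; exfalso; apply: Hn; exists l.
    by rewrite scaler0.
  have [c Hc] : exists c, D (delta_mx 0 l) 0 c != 0.
    case: (pselect (exists c, D (delta_mx 0 l) 0 c != 0)) => // Hn; exfalso.
    move/eqP: Hl; apply; apply/rowP => c; rewrite [RHS]mxE.
    by case: (eqVneq (D (delta_mx 0 l) 0 c) 0) => // H; exfalso; apply: Hn; exists c.
  exists (\row_l' D (delta_mx 0 l') 0 c) => _; split.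
    apply/negP => /eqP H0; move: Hc.
    have := congr1 (fun v : 'rV_n => v 0 l) H0; rewrite [LHS]mxE [RHS]mxE => ->.
    by rewrite eqxx.
  move=> t Ht; rewrite -subr_eq0 -/(D (bt t)); apply/negP => /eqP H0; move: Ht.
  have -> : \sum_(l0 < n) (\row_l' D (delta_mx 0 l') 0 c) 0 l0 * t ^+ l0 = D (bt t) 0 c.
    rewrite (aD_expandZ HD (bt t)) summxE; apply: eq_bigr => l' _.
    by rewrite !mxE mulrC.
  by rewrite H0 mxE eqxx.
have [f Hf] := choice Hd.
pose ds := [seq f p | p <- enum {: 'I_(size gs) * 'I_(size gs)} & `[< bad p >]].
have Hmem : forall p, bad p -> f p \in ds.
  by move=> p Hb; apply: map_f; rewrite mem_filter mem_enum andbT; apply/asboolP.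
have Hnz : forall d, d \in ds -> d != 0.
  move=> d /mapP[p]; rewrite mem_filter => /andP[/asboolP Hb _] ->.
  exact: (Hf p Hb).1.
have [t Ht] := poly_avoid Hnz.
exists (bt t) => g h Hg Hh Heq x.
have [i1 [Hi1 E1]] := rep Hg; have [i2 [Hi2 E2]] := rep Hh.
rewrite -(@act_ext _ _ x Hi1 E1) -(@act_ext _ _ x Hi2 E2).
case: (pselect (bad (i1, i2))) => [Hb|Hnb].
  exfalso; have := (Hf _ Hb).2 t (Ht _ (Hmem _ Hb)).
  by rewrite /= (@act_ext _ _ _ Hi1 E1) (@act_ext _ _ _ Hi2 E2) Heq eqxx.
case: (eqVneq (act (G i1) x) (act (G i2) x)) => // Hne; exfalso; apply: Hnb.
by split => //; split => //; exists x.
Qed.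

Definition lamf (s : int) (x : 'rV[int]_n) : int := \sum_(l < n) x 0 l * s ^+ l.

Lemma lamfD s x y : lamf s (x + y) = lamf s x + lamf s y.
Proof. by rewrite /lamf -big_split; apply: eq_bigr => l _; rewrite mxE mulrDl. Qed.

Lemma choose_lam b0 : exists s, forall g h, galK K g -> galK K h ->
  act g b0 != act h b0 -> lamf s (act g b0) != lamf s (act h b0).
Proof.
pose good (p : 'I_(size gs) * 'I_(size gs)) :=
  `[< galK K (G p.1) /\ galK K (G p.2) >] && (act (G p.1) b0 != act (G p.2) b0).
pose ds := [seq act (G p.1) b0 - act (G p.2) b0 | p <- enum {: 'I_(size gs) * 'I_(size gs)} & good p].
have Hnz : forall d, d \in ds -> d != 0.
  move=> d /mapP[p]; rewrite mem_filter => /andP[/andP[_ Hne] _] ->.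
  by rewrite subr_eq0.
have [s Hs] := poly_avoid Hnz.
exists s => g h Hg Hh Hne.
have [i1 [Hi1 E1]] := rep Hg; have [i2 [Hi2 E2]] := rep Hh.
rewrite -(@act_ext _ _ _ Hi1 E1) -(@act_ext _ _ _ Hi2 E2) in Hne *.
have Hgood : good (i1, i2) by rewrite /good /= Hne andbT; apply/asboolP.
have Hin : (i1, i2) \in [seq p <- enum {: 'I_(size gs) * 'I_(size gs)} | good p].
  by rewrite mem_filter Hgood mem_enum.
have := Hs _ (map_f (fun p => act (G p.1) b0 - act (G p.2) b0) Hin).
rewrite -/(lamf s (act (G i1) b0 - act (G i2) b0)).
by rewrite (lamB (@lamfD s)) subr_eq0.
Qed.

Lemma choose_b : exists (lam : 'rV[int]_n -> int) (b : 'rV[int]_n),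
  [/\ forall x y, lam (x + y) = lam x + lam y,
      forall g, galK K g -> act g b != b -> lam (act g b) < lam b &
      forall g, galK K g -> act g b = b -> forall x, act g x = x].
Proof.
have [b0 Hb0] := choose_b0; have [s Hs] := choose_lam b0.
have [i0 [Hi0 _]] := rep galK_id.
have Hi0' : `[< galK K (G i0) >] by apply/asboolP.
case: (@arg_maxP _ _ 'I_(size gs) i0 (fun i => `[< galK K (G i) >])
         (fun i => lamf s (act (G i) b0)) Hi0') => im /asboolP Him Hmax.
exists (lamf s), (act (G im) b0); split.
- exact: lamfD.
- move=> g Hg Hne.
  have Hgc := galK_comp Hg Him.
  have [i [Hi E]] := rep Hgc.
  have Ha : act g (act (G im) b0) = act (G i) b0 by rewrite -act_comp // (act_ext _ Hi E).
  rewrite Ha lt_neqAle; apply/andP; split.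
    by apply: Hs => //; rewrite -Ha.
  by have := Hmax i (asboolT Hi).
- move=> g Hg Heq x.
  have Hgc := galK_comp Hg Him.
  have H1 := Hb0 _ _ Hgc Him; rewrite act_comp // Heq in H1.
  have [h' [Hh' c1 c2]] := galK_inv Him.
  have Hx : x = act (G im) (act h' x) by rewrite act_cancel.
  by rewrite Hx -act_comp // H1.
Qed.

Lemma choose_points : exists (lam : 'rV[int]_n -> int) (p0 : 'rV[int]_n),
  [/\ forall x y, lam (x + y) = lam x + lam y,
      forall g, galK K g -> act g p0 != p0 -> lam (act g p0) < lam p0 &
      forall (l : 'I_n) g, galK K g -> act g (p0 + delta_mx 0 l) != p0 + delta_mx 0 l ->
        lam (act g (p0 + delta_mx 0 l)) < lam (p0 + delta_mx 0 l)].
Proof.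
have [lam [b [HlD Hlt Hfix]]] := choose_b.
pose dev (q : 'I_(size gs) * 'I_n) :=
   absz (lam (act (G q.1) (delta_mx 0 q.2)) - lam (delta_mx 0 q.2))%R.
pose Bn := \max_(q : 'I_(size gs) * 'I_n | `[< galK K (G q.1) >]) dev q.
pose N := Bn.+1.
have lamMn : forall x m, lam (x *+ m) = lam x * m%:Z.
  by move=> x m; rewrite (aDMn HlD) -mulr_natr natz.
have actMn : forall g x m, galK K g -> act g (x *+ m) = act g x *+ m.
  by move=> g x m Hg; rewrite (aDMn (fun x y => @actD g x y Hg)).
have Hgb : forall g, galK K g -> act g b != b -> lam (act g (b *+ N)) < lam (b *+ N).
  move=> g Hg Hne; rewrite actMn // !lamMn; have := Hlt g Hg Hne; nia.
exists lam, (b *+ N); split => //.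
- move=> g Hg Hne; apply: Hgb => //; apply: contraNneq Hne => Hb.
  by rewrite (Hfix g Hg Hb).
- move=> l g Hg Hne.
  have Hb : act g b != b.
    by apply: contraNneq Hne => Hb; rewrite (Hfix g Hg Hb).
  have [i [Hi E]] := rep Hg.
  have Hbd : (absz (lam (act (G i) (delta_mx 0 l)) - lam (delta_mx 0 l))%R <= Bn)%N.
    by apply: (@leq_bigmax_cond _ (fun q : 'I_(size gs) * 'I_n => `[< galK K (G q.1) >]) dev (i, l)); apply/asboolP.
  rewrite (@act_ext _ _ _ Hi E) in Hbd.
  rewrite actD // !HlD actMn // !lamMn.
  have := Hlt g Hg Hb; move: Hbd; rewrite /N; nia.
Qed.

End Orbits.

Hypothesis (G_fin : exists gs : seq (L -> L), forall g, galK (frac_field j) g ->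
      exists2 g', List.In g' gs & g =1 g').

Lemma e_kspan (s : seq Gam) x : kspan [set y | y \in s] x ->
  kspan [set y | y \in map e s] (e x).
Proof.
move: x; apply: kspan_ind.
- by rewrite rmorph0; apply: kspan0.
- by move=> x y Hx Hy; rewrite rmorphD; apply: kspanD.
- move=> c z zin; rewrite linearZ; apply: kspanZ; apply: kspan_base.
  exact: map_f.
Qed.

Lemma spow_prod_ord (W : set U) m n0 (F : 'I_n0 -> U) :
  (forall i, spow W m (F i)) -> spow W (n0 * m) (\prod_(i < n0) F i).
Proof.
elim: n0 F => [|n0 IH] F H.
  rewrite big_ord0 mul0n; have -> : (1 : U) = \prod_(v <- [::]) v by rewrite big_nil.
  exact: spow_word.
rewrite big_ord_recr /= mulSn addnC; apply: spow_mul => //.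
by apply: IH => i; apply: H.
Qed.

Lemma count_step (sV : seq Gam) (ts : seq U) (lam : 'rV[int]_n -> int)
  (lamD : forall x y, lam (x + y) = lam x + lam y) (p0 : 'rV[int]_n)
  (y0 : U) (yl : 'I_n -> U) m :
  top lam y0 p0 -> (forall l, top lam (yl l) (p0 + delta_mx 0 l)) ->
  (forall v, v \in sV -> e v \in ts) -> y0 \in ts -> (forall l, yl l \in ts) ->
  kspan [set y | y \in sV] 1 ->
  exists dm Dm : nat,
    [/\ kdim R (spow (kspan [set y | y \in sV]) m) = (dm%:R)%:E,
        kdim R (spow (spow (kspan [set y | y \in ts]) n.+1) m) = (Dm%:R)%:E,
        (1 <= dm)%N & (dm * m.+1 ^ n <= Dm)%N].
Proof.
move=> Htop0 Htopl HsV Hy0 Hyl V1.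
set V := kspan [set y | y \in sV]; set W := kspan [set y | y \in ts].
have [vs [Hvi HvV Hkv]] := kdim_attained R (@spow_fin _ _ sV m).
have HW' : forall x, spow (spow W n.+1) m x ->
    kspan [set y | y \in wprods (wprods ts n.+1) m] x.
  by move=> x; rewrite /W spow_kspan_eq; apply: spow_fin.
have [ws [Hwi HwW Hkw]] := kdim_attained R HW'.
exists (size vs), (size ws); split => //.
  have H1 : lin_indep [:: (1 : Gam)].
    move=> cs Hcs; rewrite big_ord1 /= => /eqP; rewrite scaler_eq0 oner_eq0 orbF.
    by move=> /eqP H0 i; rewrite ltnS leqn0 => /eqP ->.
  have H2 : (((size [:: (1 : Gam)])%:R)%:E <= kdim R (spow V m))%E.
    by apply: kdim_ge H1 _ => w; rewrite inE => /eqP ->; apply: spow_one.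
  by move: H2; rewrite Hkv lee_fin ler_nat.
pose Y (a : {ffun 'I_n -> 'I_m.+1}) := \prod_(l < n) (yl l ^+ a l * y0 ^+ (m - a l)).
pose P (a : {ffun 'I_n -> 'I_m.+1}) :=
  \sum_(l < n) ((p0 + delta_mx 0 l) *+ a l + p0 *+ (m - a l)).
have HtopY : forall a, top lam (Y a) (P a).
  move=> a; apply: top_prod => // l; apply: top_mul => //; exact: top_exp.
have Pinj : injective P.
  have HP : forall a, P a = \sum_(l < n) p0 *+ m + \sum_(l < n) (a l)%:Z *: delta_mx 0 l.
    move=> a; rewrite -big_split; apply: eq_bigr => l _ /=.
    rewrite mulrnDl addrAC -mulrnDr subnKC; first by congr (_ + _); rewrite pmulrn -scaler_int intz.
    by rewrite -ltnS ltn_ord.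
  move=> a b; rewrite !HP => /addrI Hab; apply/ffunP => l; apply: val_inj.
  have := congr1 (fun v : 'rV[int]_n => v 0 l) Hab; rewrite /= !summxE.
  rewrite (bigD1 l) //= [in RHS](bigD1 l) //= !big1 ?addr0.
  - by rewrite !mxE !eqxx /= !mulr1 => /eqP; rewrite eqz_nat => /eqP.
  - by move=> i Hi; rewrite !mxE [l == i]eq_sym (negbTE Hi) andbF mulr0.
  - by move=> i Hi; rewrite !mxE [l == i]eq_sym (negbTE Hi) andbF mulr0.
have Hfam := indep_family Hvi HtopY Pinj.
have Hsub : forall w, w \in [seq e (vs`_x.1) * Y x.2 |
      x : ('I_(size vs) * {ffun 'I_n -> 'I_m.+1})%type <- enum {: 'I_(size vs) * {ffun 'I_n -> 'I_m.+1}}] ->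
    spow (spow W n.+1) m w.
  move=> w /mapP[[i a] _ ->] /=; apply: spow_spow; rewrite mulSn.
  apply: spow_mul.
    apply: (e_spow (V := V)); last by apply: HvV; exact: mem_nth.
    move=> v Hv; apply: kspan_mono (e_kspan Hv) => z /= zin.
    by move: zin => /mapP[v' v'in ->]; apply: HsV.
  apply: spow_prod_ord => l.
  have Hm : (a l + (m - a l) = m)%N by rewrite subnKC // -ltnS ltn_ord.
  have Hy0W : W y0 by apply: kspan_base.
  have HylW : W (yl l) by apply: kspan_base; apply: Hyl.
  by have := spow_mul (spowX (a l) HylW) (spowX (m - a l) Hy0W); rewrite Hm.
have := kdim_ge R Hfam Hsub; rewrite Hkw lee_fin ler_nat.
by rewrite size_map -cardE card_prod card_ord card_ffun !card_ord.
Qed.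

Lemma main_ineq : (GKdim Gam R + (n%:R)%:E <= GKdim U R)%E.
Proof.
have [gs Hgs] := G_fin.
have [lam [p0 [HlD H0 Hl]]] := choose_points Hgs.
have [y0 Hy0top] := top_exists Hgs H0.
have Hyl : forall l : 'I_n, exists y, top lam y (p0 + delta_mx 0 l).
  by move=> l; have := top_exists Hgs (Hl l); apply.
have [yl Hyltop] := choice Hyl.
rewrite /GKdim; apply: sup_add_le => _ [V [[sV ->] V1] <-].
pose ts := map e sV ++ (y0 :: [seq yl l | l <- enum 'I_n]).
have HsV : forall v, v \in sV -> e v \in ts by move=> v vin; rewrite mem_cat map_f.
have Hy0 : y0 \in ts by rewrite mem_cat in_cons eqxx orbT.
have Hylt : forall l, yl l \in ts.
  by move=> l; rewrite mem_cat in_cons map_f ?orbT // mem_enum.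
pose W' := spow (kspan [set y | y \in ts]) n.+1.
have HW'fd : fd_sub1 W'.
  split; first by exists (wprods ts n.+1); rewrite /W' spow_kspan_eq.
  apply: spow_one; have := e_kspan V1; rewrite rmorph1.
  by apply: kspan_mono => z /mapP[v vin ->]; exact: HsV.
apply: le_trans; last by apply: ereal_sup_ubound; exists W'.
apply: (@limsup_shift_le _ _ _ _ 2) => m Hm.
have [dm [Dm [E1 E2 Hd HD]]] := count_step HlD m Hy0top Hyltop HsV Hy0 Hylt V1.
rewrite E1 /W' E2 /= -EFinD lee_fin.
have lm : 0 < ln (m%:R : R) by apply: ln_gt0; rewrite ltr1n.
have hdm : (0 : R) < dm%:R by rewrite ltr0n.
have hm1 : (0 : R) < m.+1%:R by rewrite ltr0n.
have hDm : (0 < Dm)%N.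
  by apply: leq_trans HD; rewrite muln_gt0 Hd expn_gt0.
have key : ln (dm%:R : R) + ln (m%:R : R) *+ n <= ln (Dm%:R : R).
  have h1 : ln (dm%:R * (m.+1%:R) ^+ n : R) <= ln (Dm%:R : R).
    rewrite ler_ln ?posrE ?mulr_gt0 ?exprn_gt0 ?ltr0n //.
    by rewrite -natrX -natrM ler_nat.
  rewrite lnM ?posrE ?exprn_gt0 // lnXn // in h1.
  apply: le_trans h1; rewrite lerD2l; apply: ler_wMn2r.
  by rewrite ler_ln ?posrE ?ltr0n // ?ler_nat // (leq_trans _ Hm).
rewrite ler_pdivlMr // mulrDl divfK ?gt_eqF // mulr_natl.
exact: key.
Qed.

End Main.

Unset Implicit Arguments.

Theorem proposition5p5
  (R : realType) (k : closedFieldType) (chark0 : [pchar k] =i pred0)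
  (L : fieldType) (iota : {rmorphism k -> L})
  (n : nat) (phi : 'rV[int]_n -> L -> L)
  (Gam : comAlgType k) (U : algType k) (e : {lrmorphism Gam -> U})
  (u : U -> 'rV[int]_n -> L) (j : Gam -> L)
  (* Gamma : finitely generated commutative k-domain *)
  (Gam_nontriv : (1 : Gam) != 0)
  (Gam_dom : forall x y : Gam, x * y = 0 -> x = 0 \/ y = 0)
  (Gam_fg : exists s : seq Gam, forall x, subalg_gen [set y | y \in s] x)
  (* Gamma subset U, U finitely generated over Gamma *)
  (e_inj : injective e)
  (U_fg : exists s : seq U,
      forall x, subalg_gen (fun y => y \in s \/ exists g, y = e g) x)
  (* M = phi(Z^n) : a monoid of k-automorphisms of L isomorphic to Z^n *)
  (phi_aut : forall a, is_ring_aut (phi a))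
  (phi_k : forall a c, phi a (iota c) = iota c)
  (phi0 : forall x, phi 0 x = x)
  (phiD : forall a b x, phi (a + b) x = phi a (phi b x))
  (* separating property, K = Frac Gamma *)
  (phi_sep : forall a b, (forall x, frac_field j x -> phi a x = phi b x) -> a = b)
  (* L / K finite Galois with group G = Gal(L/K) *)
  (G_fin : exists gs : seq (L -> L), forall g, galK (frac_field j) g ->
      exists2 g', List.In g' gs & g =1 g')
  (G_fix : forall x, (forall g, galK (frac_field j) g -> g x = x) -> frac_field j x)
  (* G acts on M by conjugation *)
  (G_M : forall g, galK (frac_field j) g -> forall a,
      exists b, forall x, phi b (g x) = g (phi a x))
  (* u : embedding of k-algebras U -> L*M *)
  (u_inj : injective u)
  (u_fin : forall v, fin_supp (u v))
  (u1 : forall a, u 1 a = if a == 0 then 1 else 0)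
  (uD : forall v w a, u (v + w) a = u v a + u w a)
  (uZ : forall (c : k) v a, u (c *: v) a = iota c * u v a)
  (uM : forall v w (s : seq 'rV[int]_n), uniq s ->
      (forall a, u v a != 0 -> a \in s) ->
      forall c, u (v * w) c = \sum_(a <- s) u v a * phi a (u w (c - a)))
  (* the embedding restricted to Gamma is Gamma ⊂ K ⊂ L ⊂ L*M *)
  (u_Gam : forall g a, u (e g) a = if a == 0 then j g else 0)
  (* KU = UK = (L*M)^G *)
  (KU_eq : forall f, KU (frac_field j) u f <-> Kcal phi (frac_field j) f)
  (UK_eq : forall f, UK phi (frac_field j) u f <-> Kcal phi (frac_field j) f) :
  (GKdim U R >= GKdim Gam R + (n%:R)%:E)%E.
Proof.
exact: (main_ineq R Gam_nontriv e_inj phi_aut phi0 phiD phi_sep u_inj u_fin u1 uD uM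
  u_Gam G_M KU_eq G_fin).
Qed.
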